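(* For every integer $n\ge 2$, $$F(D_n)=\tau(n)+\pi(n-1)-\pi\!\left(\tfrac n2\right)+\gamma_{n/2}(n).$$ In particular, if $n$ is prime, $F(D_n)=\pi(n)-\pi\!\left(\tfrac n2\right)+1$.
   Context: $D_n$ is the graph with vertex set $\{1,\dots,n\}$ in which distinct $a,b$ are adjacent iff $\gcd(a,b)\mid n$ (the maximal Diophantine graph of order $n$). $F(G)$ is the number of vertices of degree $n-1$ in a graph $G$ of order $n$. $\pi(x)$ is the number of primes $\le x$, $\tau(n)$ the number of positive divisors of $n$. For a prime $p$, $\acute v_p(n):=v_p(n)+1$, where $v_p$ is the $p$-adic valuation. For a real $0<x<n$, $\gamma_x(n):=\left|\{p^{\acute v_p(n)} : p \text{ prime},\ p\mid n,\ x<p^{\acute v_p(n)}<n\}\right|$. *)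

(* Defs.v *)
From mathcomp Require Import all_boot all_order all_algebra.
Set Implicit Arguments. Unset Strict Implicit. Unset Printing Implicit Defensive.
Import Order.TTheory GRing.Theory Num.Theory.

Definition Dadj (n a b : nat) : bool := (a != b) && (gcdn a b %| n).

Definition Dverts (n : nat) : seq nat := iota 1 n.

Definition Ddeg (n a : nat) : nat := count (Dadj n a) (Dverts n).

Definition F_D (n : nat) : nat := count (fun a => Ddeg n a == n.-1) (Dverts n).

Definition primepi (x : nat) : nat := count prime (iota 0 x.+1).

Definition tau (n : nat) : nat := size (divisors n).

Definition vacute (p n : nat) : nat := (logn p n).+1.

(* gamma_x(n) for real (here rational) 0 < x < n:
   number of distinct values p^(v'_p(n)), p prime, p | n, x < p^(v'_p(n)) < n *)
Definition gamma (x : rat) (n : nat) : nat :=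
  size (undup [seq p ^ vacute p n | p <- primes n &
                 (x < ((p ^ vacute p n)%:R : rat))%R && (p ^ vacute p n < n)]).

(* Main.v *)
Require Import Defs.
From mathcomp Require Import all_boot all_order all_algebra zify.
Import GRing.Theory Num.Theory.

Definition full (n a : nat) : bool :=
  all (fun b => (b == a) || (gcdn a b %| n)) (iota 1 n).

Definition G (n : nat) : seq nat :=
  undup [seq p ^ vacute p n | p <- primes n &
                 (((n%:R / 2%:R)%R : rat) < ((p ^ vacute p n)%:R : rat))%R && (p ^ vacute p n < n)].

Lemma deg_full n a : a \in iota 1 n ->
  (Ddeg n a == n.-1) = full n a.
Proof.
move=> Ha.
rewrite /Ddeg /full.
have -> : count (Dadj n a) (Dverts n) =
          count (fun b => gcdn a b %| n) [seq x <- iota 1 n | predC1 a x].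
  rewrite count_filter /Dverts; apply: eq_count => b /=.
  by rewrite /Dadj andbC eq_sym.
have Hs : size [seq x <- iota 1 n | predC1 a x] = n.-1.
  rewrite size_filter.
  have := count_predC (pred1 a) (iota 1 n).
  rewrite size_iota count_uniq_mem ?iota_uniq // Ha => Hc.
  have -> : count (predC1 a) (iota 1 n) = count (predC (pred1 a)) (iota 1 n).
    by apply: eq_count.
  lia.
rewrite -Hs -all_count all_filter; apply: eq_all => b /=.
by rewrite implybE negbK.
Qed.

Lemma half_lt n a : (n./2 < a) = (n < a.*2).
Proof.
rewrite -[in RHS](odd_double_half n); case: (odd n) => /=; lia.
Qed.

Lemma rat_lt n q : (((n%:R / 2%:R)%R : rat) < (q%:R : rat))%R = (n < q.*2).
Proof.
by rewrite ltr_pdivrMr ?ltr0n // -natrM ltr_nat muln2.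
Qed.

Lemma G_mem n a : a \in G n ->
  exists p, [/\ p \in primes n, a = p ^ (logn p n).+1, n < a.*2 & a < n].
Proof.
rewrite mem_undup => /mapP [p]; rewrite mem_filter rat_lt => /andP [/andP [H1 H2] Hp] ->.
by exists p.
Qed.

Lemma mem_G n a p : p \in primes n -> a = p ^ (logn p n).+1 -> n < a.*2 -> a < n ->
  a \in G n.
Proof.
move=> Hp Ha H1 H2; rewrite mem_undup; apply/mapP; exists p => //.
  by rewrite mem_filter Hp rat_lt /vacute -Ha H1 H2.
Qed.

Lemma fullpp n a p : prime p -> a = p ^ (logn p n).+1 -> n < a.*2 -> 0 < n -> full n a.
Proof.
move=> pp Ha H2 n0; apply/allP => b; rewrite mem_iota => Hb.
case: eqVneq => //= Hba.
have : gcdn a b %| p ^ (logn p n).+1 by rewrite -Ha dvdn_gcdl.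
case/(dvdn_pfactor _ _ pp) => j Hj Hg.
rewrite Hg pfactor_dvdn //.
case: (leqP j (logn p n)) => // Hj2.
have Hja : j = (logn p n).+1 by lia.
have : a %| b by rewrite Ha -Hja -Hg dvdn_gcdr.
case/dvdnP => k Hk.
have a0 : 0 < a by rewrite Ha expn_gt0 prime_gt0.
exfalso.
have k1 : k != 1 by apply/eqP => k1; move: Hba; rewrite Hk k1 mul1n eqxx.
have k0 : 0 < k by case: k Hk k1 => // Hk; move: Hb; rewrite Hk; lia.
have k2 : 2 <= k by lia.
have : 2 * a <= k * a by rewrite leq_mul2r k2 orbT.
move: Hb H2; rewrite Hk; lia.
Qed.

Lemma pt n a : 2 <= n -> a \in iota 1 n ->
  (full n a : nat) = (a %| n) + (prime a && (n./2 < a) && (a < n)) + (a \in G n).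
Proof.
move=> n2 Ha; have n0 : 0 < n by lia.
move: (Ha); rewrite mem_iota => Ha'.
case Hd: (a %| n).
  have -> : full n a.
    by apply/allP => b _; rewrite (dvdn_trans (dvdn_gcdl a b) Hd) orbT.
  have -> : (prime a && (n./2 < a) && (a < n)) = false.
    apply/negP => /andP [/andP [_ H1] H2]; move: H1; rewrite half_lt.
    case/dvdnP: Hd H2 n0 => k ->; case: k => [|[|k]]; try lia.
  have -> : (a \in G n) = false.
    apply/negP => /G_mem [p [Hp Hpa _ _]].
    move: Hd; rewrite Hpa pfactor_dvdn //; first by rewrite ltnn.
    by move: Hp; rewrite mem_primes => /andP [].
  by [].
have excl : prime a && (n./2 < a) && (a < n) -> (a \in G n) = false.
  move=> /andP [/andP [pa _] _]; apply/negP => /G_mem [p [Hp Hpa _ _]].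
  move: Hp; rewrite mem_primes => /and3P [pp _ pn].
  have : p %| a by rewrite Hpa expnS dvdn_mulr.
  rewrite dvdn_prime2 // => /eqP pa'.
  by move: Hd; rewrite -pa' pn.
have key : full n a = (prime a && (n./2 < a) && (a < n)) || (a \in G n).
  apply/idP/idP.
  - move=> Hf.
    have [p Hp Hnd] : exists2 p, p \in primes a & ~~ (a`_p %| n).
      case Hh: (has (fun p : nat => ~~ (a`_p %| n)) (primes a)).
        by case/hasP: Hh => p H1 H2; exists p.
      move/hasPn: Hh => Hh; exfalso.
      have : a %| n.
        apply/dvdn_partP; first lia.
        by move=> p Hp; have := Hh p Hp; rewrite negbK.
      by rewrite Hd.
    have pp : prime p by move: Hp; rewrite mem_primes => /andP [].
    have a0 : 0 < a by lia.
    move: Hnd; rewrite p_part pfactor_dvdn // -ltnNge => Hlt.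
    set q := p ^ (logn p n).+1.
    have qa : q %| a by rewrite /q pfactor_dvdn.
    have qn : ~~ (q %| n) by rewrite /q pfactor_dvdn // ltnn.
    have q0 : 0 < q by rewrite /q expn_gt0 prime_gt0.
    have qle : q <= a by apply: dvdn_leq.
    move/allP: (Hf) => Hf'.
    have Hqa : q = a.
      have : q \in iota 1 n by rewrite mem_iota; lia.
      move/Hf'; rewrite (gcdn_idPr qa) (negbTE qn) orbF; by move/eqP.
    have H2 : n < a.*2.
      case: (leqP a.*2 n) => // Hle; exfalso.
      have : a.*2 \in iota 1 n by rewrite mem_iota; lia.
      move/Hf'; rewrite -Hqa.
      have -> : gcdn q q.*2 = q by apply/gcdn_idPl; rewrite -muln2 dvdn_mulr.
      rewrite (negbTE qn) orbF; lia.
    have H3 : a < n.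
      case: (ltnP a n) => // Hge; exfalso.
      have : a = n by lia.
      by move=> e; move: Hd; rewrite e dvdnn.
    case Hpn: (p \in primes n).
      by rewrite (@mem_G n a p Hpn (esym Hqa)) // orbT.
    have Hl : logn p n = 0.
      by apply/eqP; rewrite eqn0Ngt logn_gt0 Hpn.
    have ap : p = a by rewrite -Hqa /q Hl expn1.
    by rewrite -ap pp /= half_lt ap H2 H3.
  - case/orP.
    + move=> /andP [/andP [pa H1] H2]; apply: (@fullpp n a a) => //.
      * have -> : logn a n = 0.
          by apply/eqP; rewrite eqn0Ngt logn_gt0 mem_primes pa n0 Hd.
        by rewrite expn1.
      * by rewrite -half_lt.
    + move/G_mem => [p [Hp Hpa H2 _]].
      apply: (@fullpp n a p) => //.
      by move: Hp; rewrite mem_primes => /andP [].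
rewrite key.
case E: (prime a && (n./2 < a) && (a < n)); first by rewrite (excl E).
by case: (a \in G n).
Qed.

Lemma count3 (T : eqType) (s : seq T) (p q r t : pred T) :
  {in s, forall x, (p x : nat) = q x + r x + t x} ->
  count p s = count q s + count r s + count t s.
Proof.
elim: s => //= x s IH H.
rewrite IH; last by move=> y Hy; apply: H; rewrite inE Hy orbT.
rewrite H ?inE ?eqxx //; lia.
Qed.

Lemma count_sub (s g : seq nat) : uniq s -> uniq g -> {subset g <= s} ->
  count (mem g) s = size g.
Proof.
move=> us ug sub; rewrite -size_filter; apply: perm_size; apply: uniq_perm.
- exact: filter_uniq.
- exact: ug.
- move=> x; rewrite mem_filter; apply/andP/idP => [[]//|Hx]; split => //; exact: sub.
Qed.

Lemma count_primes n : 2 <= n ->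
  count (fun a => prime a && (n./2 < a) && (a < n)) (iota 1 n) + primepi n./2
  = primepi n.-1.
Proof.
move=> n2; set m := n./2.
have Hmn : m < n by rewrite /m half_lt; lia.
have E1 : iota 1 n = iota 1 m ++ iota m.+1 (n - m.+1) ++ [:: n].
  rewrite -[in LHS](_ : m + ((n - m.+1) + 1) = n); last lia.
  rewrite iotaD iotaD /= add1n.
  by rewrite (_ : m.+1 + (n - m.+1) = n) //; lia.
have E2 : iota 0 n = iota 0 m.+1 ++ iota m.+1 (n - m.+1).
  by rewrite -iotaD; congr iota; lia.
rewrite /primepi prednK; last lia.
rewrite E1 E2 !count_cat /= ltnn andbF addn0.
have -> : count (fun a => prime a && (m < a) && (a < n)) (iota 1 m) = 0.
  apply/eqP; rewrite -leqn0 leqNgt -has_count; apply/hasPn => a; rewrite mem_iota => Ha /=.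
  apply/negP => /andP [/andP [_ H] _]; lia.
have -> : count (fun a => prime a && (m < a) && (a < n)) (iota m.+1 (n - m.+1)) =
          count prime (iota m.+1 (n - m.+1)).
  apply: eq_in_count => a; rewrite mem_iota => Ha /=.
  have -> : m < a by lia.
  have -> : a < n by lia.
  by rewrite !andbT.
lia.
Qed.

Theorem mainTheorem6 :
  forall n : nat, 2 <= n ->
    ((F_D n)%:Z = (tau n)%:Z + (primepi n.-1)%:Z - (primepi n./2)%:Z
                  + (gamma ((n%:R / 2%:R)%R : rat) n)%:Z)%R /\
    (prime n -> ((F_D n)%:Z = (primepi n)%:Z - (primepi n./2)%:Z + 1)%R).
Proof.
move=> n n2.
have n0 : 0 < n by lia.
have HF : F_D n = tau n + count (fun a => prime a && (n./2 < a) && (a < n)) (iota 1 n)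
                  + gamma ((n%:R / 2%:R)%R : rat) n.
  rewrite /F_D /Dverts.
  rewrite (eq_in_count (a2 := full n)); last by move=> a Ha; apply: deg_full.
  rewrite (@count3 _ (iota 1 n) (full n) (fun a => a %| n)
             (fun a => prime a && (n./2 < a) && (a < n)) (fun a => a \in G n)); last first.
    by move=> a Ha; apply: pt.
  have -> : gamma ((n%:R / 2%:R)%R : rat) n = size (G n) by [].
  rewrite (@count_sub (iota 1 n) (G n)) ?iota_uniq ?undup_uniq //; last first.
    move=> a /G_mem [p [Hp -> _ H]]; rewrite mem_iota expn_gt0 prime_gt0 /=; last first.
      by move: Hp; rewrite mem_primes => /andP [].
    move: H; lia.
  congr (_ + _ + _).
  rewrite /tau -(@count_sub (iota 1 n) (divisors n)) ?iota_uniq ?divisors_uniq //.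
    by apply: eq_count => a /=; rewrite -dvdn_divisors.
  move=> d; rewrite -dvdn_divisors // => Hd; rewrite mem_iota.
  have := dvdn_leq n0 Hd; have := dvdn_gt0 n0 Hd; lia.
have Hc := @count_primes n n2.
have Part1 : ((F_D n)%:Z = (tau n)%:Z + (primepi n.-1)%:Z - (primepi n./2)%:Z
                  + (gamma ((n%:R / 2%:R)%R : rat) n)%:Z)%R by lia.
split => // pn.
have Ht : tau n = 2.
  rewrite /tau (@perm_size _ _ [:: 1; n]) //.
  apply: uniq_perm; first exact: divisors_uniq.
    by rewrite /= inE andbT; apply/eqP => e; move: n2; rewrite -e.
  move=> d; rewrite -dvdn_divisors // !inE.
  case: (eqVneq d 1) => [->|d1]; first by rewrite dvd1n.
  rewrite /=.
  apply/idP/idP => [/(prime_nt_dvdP pn d1) ->|/eqP ->]; [exact: eqxx | exact: dvdnn].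
have Hg : gamma ((n%:R / 2%:R)%R : rat) n = 0.
  rewrite /gamma primes_prime //= /vacute.
  have -> : (n ^ (logn n n).+1 < n) = false.
    apply/negbTE; rewrite -leqNgt expnS leq_pmulr // expn_gt0; lia.
  by rewrite andbF.
have Hp : primepi n = primepi n.-1 + 1.
  rewrite /primepi prednK; last lia.
  by rewrite -addn1 iotaD count_cat /= pn.
rewrite Part1 Ht Hg Hp; lia.
Qed.
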